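(* $\mathrm{Im}\,\Phi$ is a subgroup of $M(\mathcal{O}_{\bf q}(k^{n}))$, and it is normal in $M(\mathcal{O}_{\bf q}(k^{n}))$.
   Context: Let $k$ be a field, $n\ge1$, and ${\bf q}=(q_{ij})\in\mathcal M_n(k)$ with $q_{ij}q_{ji}=1$, $q_{ii}=1$ for all $i,j$. $\mathcal{O}_{\bf q}(k^{n})=k\langle x_1,\dots,x_n\rangle/\langle x_jx_i-q_{ij}x_ix_j\rangle$, graded with $\deg x_i=1$. $M(\mathcal{O}_{\bf q}(k^{n}))$ is the set of $A=(a_{ij})\in \mathrm{GL}_n(k)$ such that $x_i\mapsto \sum_j a_{ji}x_j$ extends to a graded algebra automorphism of $\mathcal{O}_{\bf q}(k^{n})$; it is a subgroup of $\mathrm{GL}_n(k)$ isomorphic to $\mathrm{Aut}_{\rm gr}(\mathcal{O}_{\bf q}(k^{n}))$. $B(i)=\{1\le i'\le n: q_{i'j}=q_{ij}\ \forall j\}$; the distinct blocks $B_1,\dots,B_m$ partition $\{1,\dots,n\}$. $\Phi:\prod_{w=1}^m\mathrm{GL}_{|B_w|}(k)\to\mathrm{GL}_n(k)$ sends $(M_1,\dots,M_m)$ to the matrix whose submatrix with rows $B_w$ and columns $B_v$ (indices in increasing order) is $\delta_{wv}M_w$; it is an injective group homomorphism, and $\mathrm{Im}\,\Phi$ is the set of ${\bf m}=(m_{ij})\in\mathrm{GL}_n(k)$ with $m_{ij}=0$ whenever $B(i)\ne B(j)$. *)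

(* Defs.v *)
From HB Require Import structures.
From mathcomp Require Import all_boot all_order all_algebra.
Set Implicit Arguments.
Unset Strict Implicit.
Unset Printing Implicit Defensive.
Import GRing.Theory.
Local Open Scope ring_scope.

Definition qmatrix (k : fieldType) (n : nat) (q : 'M[k]_n) : Prop :=
  (forall i j, q i j * q j i = 1) /\ (forall i, q i i = 1).

Definition alg_hom (k : fieldType) (A B : algType k) (f : A -> B) : Prop :=
  [/\ forall a b, f (a + b) = f a + f b,
      forall (c : k) a, f (c *: a) = c *: f a,
      forall a b, f (a * b) = f a * f b
    & f 1 = 1].

Definition qrel (k : fieldType) (n : nat) (q : 'M[k]_n) (B : algType k)
    (y : 'I_n -> B) : Prop :=
  forall i j, y j * y i = q i j *: (y i * y j).

(* (A, x) is a presentation of O_q(k^n) = k<x_1..x_n>/<x_j x_i - q_ij x_i x_j>,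
   i.e. it satisfies the universal property of the algebra given by
   generators x_1..x_n and these relations. *)
Definition is_Oq (k : fieldType) (n : nat) (q : 'M[k]_n) (A : algType k)
    (x : 'I_n -> A) : Prop :=
  qrel q x /\
  forall (B : algType k) (y : 'I_n -> B), qrel q y ->
    exists f : A -> B,
      [/\ alg_hom f, (forall i, f (x i) = y i)
        & forall g : A -> B, alg_hom g -> (forall i, g (x i) = y i) ->
            forall a, g a = f a].

(* M(O_q(k^n)) : invertible a = (a_ij) such that x_i |-> sum_j a_ji x_j extends
   to an algebra automorphism of O_q(k^n) (such an automorphism maps the
   degree-one generators to degree-one elements, hence is graded). *)
Definition Mq (k : fieldType) (n : nat) (A : algType k) (x : 'I_n -> A)
    (a : 'M[k]_n) : Prop :=
  a \in unitmx /\
  exists s : A -> A,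
    [/\ alg_hom s, bijective s & forall i, s (x i) = \sum_j a j i *: x j].

Definition blk (k : fieldType) (n : nat) (q : 'M[k]_n) (i : 'I_n) : {set 'I_n} :=
  [set i' | [forall j, q i' j == q i j]].

Lemma blk_mem (k : fieldType) (n : nat) (q : 'M[k]_n) (i : 'I_n) : i \in blk q i.
Proof. by rewrite inE; apply/forallP => j. Qed.

(* Phi: a family of matrices M_B (one for each block B, rows/columns of B
   indexed in increasing order via enum_rank_in) is sent to the block
   diagonal n x n matrix whose (B(i),B(j)) block is delta M_B(i). *)
Definition Phi (k : fieldType) (n : nat) (q : 'M[k]_n)
    (Ms : forall S : {set 'I_n}, 'M[k]_#|S|) : 'M[k]_n :=
  \matrix_(i, j)
     if blk q i == blk q j then
       Ms (blk q i) (enum_rank_in (blk_mem q i) i) (enum_rank_in (blk_mem q i) j)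
     else 0.

Definition ImPhi (k : fieldType) (n : nat) (q : 'M[k]_n) (m : 'M[k]_n) : Prop :=
  exists Ms : forall S : {set 'I_n}, 'M[k]_#|S|,
    (forall i, Ms (blk q i) \in unitmx) /\ m = Phi q Ms.

(* Main.v *)
Require Import Defs.
From HB Require Import structures.
From mathcomp Require Import all_boot all_order all_algebra.
From mathcomp Require Import ring.
Set Implicit Arguments.
Unset Strict Implicit.
Import GRing.Theory.
Local Open Scope ring_scope.

Lemma blk_memP (k : fieldType) n (q : 'M[k]_n) i j :
  reflect (forall w, q j w = q i w) (j \in blk q i).
Proof. by rewrite inE; apply: (iffP forallP) => H w; apply/eqP/H. Qed.

Lemma blk_eqE (k : fieldType) n (q : 'M[k]_n) i j :
  (blk q i == blk q j) = (j \in blk q i).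
Proof.
apply/eqP/idP => [E|/blk_memP H]; first by rewrite E blk_mem.
apply/setP => z; rewrite !inE; apply: eq_forallb => w; by rewrite H.
Qed.

Lemma blk_row (k : fieldType) n (q : 'M[k]_n) i j :
  blk q i = blk q j -> forall w, q i w = q j w.
Proof.
move=> E w; have : j \in blk q i by rewrite E blk_mem.
by move/blk_memP => ->.
Qed.

Lemma blk_ext (k : fieldType) n (q : 'M[k]_n) u v :
  (forall w, q u w = q v w) -> blk q u = blk q v.
Proof.
move=> H; apply/eqP; rewrite blk_eqE; apply/blk_memP => w; by rewrite H.
Qed.

Lemma rank_indep (T : finType) (R : Type)
  (F : forall S : {set T}, 'I_#|S| -> 'I_#|S| -> R)
  (S S' : {set T}) (E : S = S') x0 y0 (h : x0 \in S) (h' : y0 \in S') u v :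
  u \in S -> v \in S ->
  F S (enum_rank_in h u) (enum_rank_in h v) =
  F S' (enum_rank_in h' u) (enum_rank_in h' v).
Proof.
subst S' => hu hv.
by rewrite (eq_enum_rank_in h h' hu) (eq_enum_rank_in h h' hv).
Qed.

Lemma Phi_mul (k : fieldType) n (q : 'M[k]_n) Ms Ns :
  Phi q Ms *m Phi q Ns = Phi q (fun S => Ms S *m Ns S).
Proof.
apply/matrixP => i j; rewrite [RHS]mxE [LHS]mxE.
have [Eij|Nij] := eqVneq (blk q i) (blk q j).
- rewrite mxE (big_enum_rank (blk_mem q i)) /=.
  rewrite [LHS](bigID (fun l => l \in blk q i)) /= [X in _ + X]big1 ?addr0;
    last first.
    move=> l hl; rewrite mxE blk_eqE (negbTE hl) mul0r //.
  apply: eq_bigr => l hl.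
  have El : blk q i = blk q l by apply/eqP; rewrite blk_eqE.
  rewrite !mxE blk_eqE hl.
  have -> : (blk q l == blk q j) = true by rewrite -El Eij eqxx.
  congr (_ * _).
  have hj : j \in blk q i by rewrite -blk_eqE Eij.
  have := @rank_indep _ _ (fun S a b => Ns S a b) _ _ (esym El) _ _ (blk_mem q l) (blk_mem q i) l j.
  have hl' : l \in blk q l by apply: blk_mem.
  have hj' : j \in blk q l by rewrite -El.
  by move=> ->.
- rewrite big1 // => l _; rewrite !mxE.
  case: eqP => [E1|]; last by rewrite mul0r.
  case: eqP => [E2|]; last by rewrite mulr0.
  by rewrite E1 E2 eqxx in Nij.
Qed.

Lemma Phi_ext (k : fieldType) n (q : 'M[k]_n) Ms Ns :
  (forall i, Ms (blk q i) = Ns (blk q i)) -> Phi q Ms = Phi q Ns.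
Proof. by move=> H; apply/matrixP => i j; rewrite !mxE H. Qed.

Lemma Phi_one (k : fieldType) n (q : 'M[k]_n) :
  Phi q (fun S => 1%:M) = 1%:M.
Proof.
apply/matrixP => i j; rewrite !mxE.
case: ifP => E.
- have hj : j \in blk q i by rewrite -blk_eqE E.
  congr ((_ : bool)%:R).
  apply/eqP/eqP => [|->//].
  by apply: enum_rank_in_inj => //; apply: blk_mem.
- case: eqP => // Eij; by rewrite Eij eqxx in E.
Qed.

Lemma invmx_uniq (k : fieldType) n (A B : 'M[k]_n) :
  A *m B = 1%:M -> invmx A = B.
Proof.
move=> H; have [uA _] := mulmx1_unit H.
by rewrite -[invmx A]mulmx1 -H mulmxA mulVmx // mul1mx.
Qed.

Lemma Phi_inv (k : fieldType) n (q : 'M[k]_n) Ms :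
  (forall i, Ms (blk q i) \in unitmx) ->
  Phi q Ms *m Phi q (fun S => invmx (Ms S)) = 1%:M.
Proof.
move=> H; rewrite Phi_mul -(Phi_one q); apply: Phi_ext => i.
by rewrite mulmxV.
Qed.

Definition BD (k : fieldType) n (q : 'M[k]_n) (m : 'M[k]_n) :=
  forall i j, blk q i != blk q j -> m i j = 0.

Definition restr (k : fieldType) n (S : {set 'I_n}) (m : 'M[k]_n) : 'M[k]_#|S| :=
  \matrix_(r, s) m (enum_val r) (enum_val s).

Lemma Phi_restr (k : fieldType) n (q : 'M[k]_n) m :
  BD q m -> Phi q (fun S => restr S m) = m.
Proof.
move=> H; apply/matrixP => i j; rewrite !mxE.
case: ifP => E.
- have hj : j \in blk q i by rewrite -blk_eqE E.
  by rewrite !enum_rankK_in // blk_mem.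
- by rewrite H // E.
Qed.

Lemma restr_mul (k : fieldType) n (q : 'M[k]_n) i m m' :
  BD q m -> restr (blk q i) (m *m m') = restr (blk q i) m *m restr (blk q i) m'.
Proof.
move=> H; apply/matrixP => r s; rewrite !mxE.
under [RHS]eq_bigr => t _ do rewrite !mxE.
rewrite -(big_enum_val (A := mem (blk q i)) (fun l => m (enum_val r) l * m' l (enum_val s))).
rewrite [LHS](bigID (fun l => l \in blk q i)) /= [X in _ + X]big1 ?addr0 //.
move=> l hl; rewrite H ?mul0r //.
have hr : enum_val r \in blk q i := enum_valP r.
have Er : blk q i = blk q (enum_val r) by apply/eqP; rewrite blk_eqE.
by rewrite -Er blk_eqE.
Qed.

Lemma restr1 (k : fieldType) n (S : {set 'I_n}) : restr S (1%:M : 'M[k]_n) = 1%:M.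
Proof.
apply/matrixP => r s; rewrite !mxE; by rewrite (inj_eq enum_val_inj).
Qed.

Lemma BD_ImPhi (k : fieldType) n (q : 'M[k]_n) m :
  m \in unitmx -> BD q m -> BD q (invmx m) -> ImPhi q m.
Proof.
move=> um hm hm'; exists (fun S => restr S m); split; last by rewrite Phi_restr.
move=> i; apply: (proj1 (@mulmx1_unit _ _ _ (restr (blk q i) (invmx m)) _)).
by rewrite -restr_mul // mulmxV // restr1.
Qed.

Lemma ImPhi_BD (k : fieldType) n (q : 'M[k]_n) m : ImPhi q m -> BD q m.
Proof. by move=> [Ms [_ ->]] i j /negbTE h; rewrite mxE h. Qed.

Lemma ImPhi_inv (k : fieldType) n (q : 'M[k]_n) m : ImPhi q m ->
  m \in unitmx /\ ImPhi q (invmx m).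
Proof.
move=> [Ms [H ->]]; have E := Phi_inv H.
split; first exact: (proj1 (mulmx1_unit E)).
exists (fun S => invmx (Ms S)); split; last exact: invmx_uniq.
by move=> i; rewrite unitmx_inv.
Qed.

Section AH.
End AH.

Lemma ah0 (k : fieldType) (A B : algType k) (f : A -> B) : alg_hom f -> f 0 = 0.
Proof.
case=> fD _ _ _; have := fD 0 0; rewrite addr0.
by move/(congr1 (fun z => z - f 0)); rewrite subrr addrK.
Qed.

Lemma ah_sum (k : fieldType) (A B : algType k) (f : A -> B) (I : finType) (F : I -> A) :
  alg_hom f -> f (\sum_i F i) = \sum_i f (F i).
Proof.
move=> hf; apply: (big_morph f _ (ah0 hf)); by case: hf.
Qed.

Lemma ah_lin (k : fieldType) (A B : algType k) (f : A -> B) n (c : 'I_n -> k) (v : 'I_n -> A) :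
  alg_hom f -> f (\sum_j c j *: v j) = \sum_j c j *: f (v j).
Proof.
move=> hf; rewrite ah_sum //; apply: eq_bigr => j _; by case: hf => _ -> _ _.
Qed.

Lemma ah_comp (k : fieldType) (A B C : algType k) (f : A -> B) (g : B -> C) :
  alg_hom f -> alg_hom g -> alg_hom (g \o f).
Proof.
case=> fD fZ fM f1 [gD gZ gM g1]; split => /=.
- by move=> a b; rewrite fD gD.
- by move=> c a; rewrite fZ gZ.
- by move=> a b; rewrite fM gM.
- by rewrite f1 g1.
Qed.

Lemma ah_id (k : fieldType) (A : algType k) : alg_hom (@id A).
Proof. by split. Qed.

Lemma lin_comp (k : fieldType) n (A : algType k) (x : 'I_n -> A) (h : A -> A)
    (a b : 'M[k]_n) :
  alg_hom h -> (forall j, h (x j) = \sum_l b l j *: x l) ->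
  forall i, h (\sum_j a j i *: x j) = \sum_l (b *m a) l i *: x l.
Proof.
move=> hh hx i; rewrite ah_lin //.
under eq_bigr => j _ do rewrite hx scaler_sumr.
rewrite exchange_big /=; apply: eq_bigr => l _.
rewrite mxE scaler_suml; apply: eq_bigr => j _.
by rewrite scalerA mulrC.
Qed.

Lemma sum_delta (k : fieldType) n (A : algType k) (x : 'I_n -> A) i :
  \sum_l (1%:M : 'M[k]_n) l i *: x l = x i.
Proof.
rewrite (bigD1 i) //= big1 ?addr0 => [|j /negbTE hj]; rewrite mxE.
  by rewrite eqxx scale1r.
by rewrite hj scale0r.
Qed.

Lemma Oq_id (k : fieldType) n (q : 'M[k]_n) (A : algType k) (x : 'I_n -> A) :
  is_Oq q x -> forall h : A -> A, alg_hom h -> (forall i, h (x i) = x i) ->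
  forall a, h a = a.
Proof.
move=> [hq hU] h hh hx a.
have [f0 [_ _ U]] := hU A x hq.
by rewrite (U h hh hx) -(U id (@ah_id _ A) (fun i => erefl)).
Qed.

Lemma key (k : fieldType) n (q : 'M[k]_n) (A : algType k) (x : 'I_n -> A)
    (hA : is_Oq q x) (a : 'M[k]_n) (s : A -> A) :
  alg_hom s -> (forall i, s (x i) = \sum_j a j i *: x j) ->
  forall (B : algType k) (y : 'I_n -> B), qrel q y -> forall i j,
  (\sum_c a c j *: y c) * (\sum_d a d i *: y d) =
  q i j *: ((\sum_c a c i *: y c) * (\sum_d a d j *: y d)).
Proof.
move=> hs sx B y hy i j.
have [f [hf fx _]] := hA.2 B y hy.
have := congr1 (fun z => f (s z)) (hA.1 i j).
case: (hs) => _ sZ sM _; case: (hf) => _ fZ fM _.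
have fxs : forall c : 'I_n -> k, f (\sum_j c j *: x j) = \sum_j c j *: y j.
  move=> c; rewrite ah_lin //; apply: eq_bigr => l _; by rewrite fx.
by rewrite /= sM sZ sM fM fZ fM !sx !fxs.
Qed.

Definition o0 : 'I_4 := @Ordinal 4 0 isT.
Definition o1 : 'I_4 := @Ordinal 4 1 isT.
Definition o2 : 'I_4 := @Ordinal 4 2 isT.
Definition o3 : 'I_4 := @Ordinal 4 3 isT.

Definition M1 (k : fieldType) : 'M[k]_4 := delta_mx o1 o0 + delta_mx o3 o2.
Definition M2 (k : fieldType) (t : k) : 'M[k]_4 := delta_mx o2 o0 + t *: delta_mx o3 o1.
Definition N1 (k : fieldType) : 'M[k]_4 := delta_mx o1 o0 + delta_mx o2 o1.

Lemma prod_form (k : fieldType) (t al be ga de : k) :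
  (al *: M1 k + be *: M2 t) *m (ga *: M1 k + de *: M2 t) =
  (al * de + be * ga * t) *: delta_mx o3 o0.
Proof.
rewrite /M1 /M2 !scalerDr !mulmxDl !mulmxDr -!scalemxAl -!scalemxAr.
rewrite !mul_delta_mx_cond /=.
rewrite !mulr0n !mulr1n !scaler0 !add0r !addr0 !scalerA.
by rewrite scalerDl; congr (_ *: _ + _ *: _); ring.
Qed.

Lemma prodN (k : fieldType) (al be : k) :
  (al *: N1 k) *m (be *: N1 k) = (al * be) *: delta_mx o2 o0.
Proof.
rewrite /N1 -!scalemxAl -!scalemxAr !mulmxDl !mulmxDr !mul_delta_mx_cond /=.
by rewrite !mulr0n !mulr1n !add0r !addr0 !scalerA mulrC.
Qed.

Lemma ind_eq (k : fieldType) n (q : 'M[k]_n) (hq : qmatrix q) (c d i j : 'I_n) :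
  c != d ->
  let al e := ((e == c)%:R : k) in let be e := ((e == d)%:R : k) in
  al j * be i + be j * al i * q c d = q i j * (al i * be j + be i * al j * q c d).
Proof.
move=> hcd al be; rewrite /al /be.
have ecd := negbTE hcd; have edc : (d == c) = false by rewrite eq_sym.
case: hq => hq1 hq2.
have [->|hic] := eqVneq i c; have [->|hjc] := eqVneq j c;
  rewrite ?eqxx ?ecd ?edc ?(negbTE hic) ?(negbTE hjc) /=.
- by rewrite hq2; ring.
- have [->|hjd] := eqVneq j d; rewrite ?eqxx ?(negbTE hjd) /=; ring.
- have [->|hid] := eqVneq i d; rewrite ?eqxx ?(negbTE hid) /=; last by ring.
  by rewrite !(mul0r, mul1r, add0r, addr0) hq1.
- have [->|hid] := eqVneq i d; have [->|hjd] := eqVneq j d;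
    rewrite ?eqxx ?(negbTE hid) ?(negbTE hjd) /=; ring.
Qed.

Lemma coef_eqs (k : fieldType) n (q : 'M[k]_n) (hq : qmatrix q) (A : algType k)
    (x : 'I_n -> A) (hA : is_Oq q x) (a : 'M[k]_n) (s : A -> A) :
  alg_hom s -> (forall i, s (x i) = \sum_j a j i *: x j) ->
  (forall c i j, a c j * a c i = q i j * (a c i * a c j)) /\
  (forall c d i j, c != d ->
     a c j * a d i + a d j * a c i * q c d =
     q i j * (a c i * a d j + a d i * a c j * q c d)).
Proof.
move=> hs sx; split.
- move=> c i j.
  pose y (e : 'I_n) : 'M[k]_4 := if e == c then N1 k else 0.
  have hy : qrel q y.
    move=> u v; rewrite /y.
    have [->|hv] := eqVneq v c; have [->|hu] := eqVneq u c;
      rewrite ?mul0r ?mulr0 ?scaler0 //.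
    by rewrite hq.2 scale1r.
  have S : forall l, \sum_e a e l *: y e = a c l *: N1 k.
    move=> l; rewrite (bigD1 c) //= big1 ?addr0 /y ?eqxx // => e /negbTE ->.
    by rewrite scaler0.
  have := key hA hs sx hy i j; rewrite !S -!mulmxE !prodN.
  move/(congr1 (fun M : 'M[k]_4 => M o2 o0)); rewrite !mxE /= !mulr1.
  by [].
- move=> c d i j hcd.
  pose t := q c d.
  pose y (e : 'I_n) : 'M[k]_4 :=
    ((e == c)%:R : k) *: M1 k + ((e == d)%:R : k) *: M2 t.
  have hy : qrel q y.
    move=> u v; rewrite /y -!mulmxE !prod_form scalerA.
    by congr (_ *: _); apply: ind_eq.
  have ecd := negbTE hcd; have edc : (d == c) = false by rewrite eq_sym.
  have S : forall l, \sum_e a e l *: y e = a c l *: M1 k + a d l *: M2 t.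
    move=> l; rewrite (bigD1 c) //= (bigD1 d) 1?eq_sym //= big1 ?addr0.
      rewrite /y !eqxx ecd edc !scale0r addr0 add0r !scale1r; done.
    move=> e /andP [hed hec]; by rewrite /y (negbTE hed) (negbTE hec) !scale0r addr0 scaler0.
  have := key hA hs sx hy i j; rewrite !S -!mulmxE !prod_form.
  move/(congr1 (fun M : 'M[k]_4 => M o3 o0)); rewrite !mxE /= !mulr1.
  by [].
Qed.

Definition good (k : fieldType) n (q : 'M[k]_n) (a : 'M[k]_n) :=
  a \in unitmx /\
  ((forall c i j, a c j * a c i = q i j * (a c i * a c j)) /\
  (forall c d i j, c != d ->
     a c j * a d i + a d j * a c i * q c d =
     q i j * (a c i * a d j + a d i * a c j * q c d))).

Lemma one_of (k : fieldType) (u X : k) : X != 0 -> X = u * X -> u = 1.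
Proof. by move=> hX e; apply: (mulIf hX); rewrite mul1r -e. Qed.

Lemma lemL (k : fieldType) n (q : 'M[k]_n) (hq : qmatrix q) a (ga : good q a) c d j :
  c != d -> a c j != 0 -> a d j != 0 -> q c d = 1.
Proof.
move=> hcd hcj hdj; case: ga => ua [E1 E2].
have [//|hs] := eqVneq (q c d) 1.
exfalso.
have H : forall l, a c l * a d j = a c j * a d l.
  move=> l.
  have [hz|hnz] := boolP ((a c l == 0) && (a d l == 0)).
    by case/andP: hz => /eqP -> /eqP ->; rewrite mul0r mulr0.
  have qjl : q j l = 1.
    move: hnz; rewrite negb_and => /orP [h|h].
    - apply: (one_of (mulf_neq0 hcj h)); by rewrite -E1 mulrC.
    - apply: (one_of (mulf_neq0 hdj h)); by rewrite -E1 mulrC.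
  have e := E2 c d j l hcd; rewrite qjl mul1r in e.
  have : (a c l * a d j - a c j * a d l) * (1 - q c d) = 0.
    have -> : (a c l * a d j - a c j * a d l) * (1 - q c d) =
      (a c l * a d j + a d l * a c j * q c d) - (a c j * a d l + a d j * a c l * q c d) by ring.
    by rewrite e subrr.
  move/eqP; rewrite mulf_eq0 subr_eq0 subr_eq0 [1 == _]eq_sym (negbTE hs) orbF.
  by move/eqP.
have ecd := negbTE hcd; have edc : (d == c) = false by rewrite eq_sym.
pose v := \row_l (if l == c then a d j else if l == d then - a c j else 0) : 'rV[k]_n.
have va : v *m a = 0.
  apply/rowP => l; rewrite !mxE (bigD1 c) //= (bigD1 d) 1?eq_sym //= big1 ?addr0.
    rewrite !mxE eqxx edc eqxx mulNr mulrC H; by rewrite subrr.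
  by move=> e /andP [hed hec]; rewrite !mxE (negbTE hed) (negbTE hec) mul0r.
have : v = 0 by rewrite -[v]mulmx1 -(mulmxV ua) mulmxA va mul0mx.
move/rowP/(_ d); rewrite !mxE edc eqxx => /eqP; rewrite oppr_eq0.
by rewrite (negbTE hcj).
Qed.

Lemma claimC (k : fieldType) n (q : 'M[k]_n) (hq : qmatrix q) a (ga : good q a) c d i j :
  a c i != 0 -> a d j != 0 -> q c d = q i j.
Proof.
move=> hci hdj; have [ua [E1 E2]] := ga.
have [ecd|hcd] := eqVneq c d.
  subst d; rewrite hq.2; apply/esym.
  apply: (one_of (mulf_neq0 hci hdj)); by rewrite -E1 mulrC.
have [hcj0|hcj] := eqVneq (a c j) 0.
  have e := E2 c d i j hcd; rewrite hcj0 !mul0r mulr0 add0r in e. move: e; rewrite mul0r addr0 => e.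
  apply: (mulIf (mulf_neq0 hci hdj)).
  by rewrite [LHS]mulrC (mulrC (a c i)) e mulrC.
rewrite (lemL hq ga hcd hcj hdj); apply/esym.
apply: (one_of (mulf_neq0 hci hcj)); by rewrite -E1 mulrC.
Qed.

Lemma conj_BD (k : fieldType) n (q : 'M[k]_n) (hq : qmatrix q) a b m :
  good q a -> good q b -> a *m b = 1%:M -> BD q m -> BD q (a *m m *m b).
Proof.
move=> ga gb ab hm u v nuv; rewrite !mxE big1 // => j _; rewrite !mxE.
rewrite mulr_suml big1 // => i _.
have [//|h] := eqVneq (a u i * m i j * b j v) 0.
exfalso; move: h; rewrite !mulf_eq0 !negb_or => /andP [/andP [hui hij] hjv].
have eij : blk q i = blk q j.
  by apply/eqP; apply/negPn/negP => h; move: hij; rewrite (hm _ _ h) eqxx.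
move/negP: nuv; apply; apply/eqP; apply: blk_ext => w.
have : (a *m b) w w != 0 by rewrite ab mxE eqxx oner_neq0.
rewrite mxE; case: (pickP (fun l => a w l * b l w != 0)) => [l hl|hn].
  move: hl; rewrite mulf_eq0 negb_or => /andP [hwl hlw] _.
  rewrite (claimC hq ga hui hwl) (blk_row eij l).
  exact: (claimC hq gb hjv hlw).
by rewrite big1 ?eqxx // => l _; move: (hn l) => /negbFE /eqP.
Qed.

Lemma Mq_good (k : fieldType) n (q : 'M[k]_n) (hq : qmatrix q) (A : algType k)
    (x : 'I_n -> A) (hA : is_Oq q x) a : Mq x a -> good q a.
Proof.
case=> ua [s [hs _ sx]]; split => //; exact: (coef_eqs hq hA hs sx).
Qed.

Lemma Mq_inv (k : fieldType) n (q : 'M[k]_n) (A : algType k)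
    (x : 'I_n -> A) (hA : is_Oq q x) a : Mq x a -> Mq x (invmx a).
Proof.
case=> ua [s [hs [g sK gK] sx]]; split; first by rewrite unitmx_inv.
have hg : alg_hom g.
  case: (hs) => sD sZ sM s1; split.
  - by move=> u v; rewrite -{1}(gK u) -{1}(gK v) -sD sK.
  - by move=> c u; rewrite -{1}(gK u) -sZ sK.
  - by move=> u v; rewrite -{1}(gK u) -{1}(gK v) -sM sK.
  - by rewrite -s1 sK.
exists g; split => //; first by exists s.
move=> i; have := @lin_comp _ _ _ _ s (invmx a) a hs sx i.
rewrite mulmxV // sum_delta => <-; by rewrite sK.
Qed.

Lemma sum_prod (k : fieldType) n (A : algType k) (x : 'I_n -> A) (u v : 'I_n -> k) :
  (\sum_c u c *: x c) * (\sum_d v d *: x d) = \sum_c \sum_d (u c * v d) *: (x c * x d).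
Proof.
rewrite mulr_suml; apply: eq_bigr => c _; rewrite mulr_sumr; apply: eq_bigr => d _.
by rewrite -scalerAl -scalerAr scalerA.
Qed.

Lemma qrel_Phi (k : fieldType) n (q : 'M[k]_n) (hq : qmatrix q) (A : algType k)
    (x : 'I_n -> A) (hA : is_Oq q x) m :
  ImPhi q m -> qrel q (fun i => \sum_j m j i *: x j).
Proof.
move=> hm i j; have BDm := ImPhi_BD hm.
rewrite /= !sum_prod exchange_big scaler_sumr; apply: eq_bigr => d _.
rewrite scaler_sumr; apply: eq_bigr => c _.
have [z|nz] := eqVneq (m c j * m d i) 0.
  by rewrite z scale0r mulrC z scale0r scaler0.
move: (nz); rewrite mulf_eq0 negb_or => /andP [hcj hdi].
have ecj : blk q c = blk q j.
  by apply/eqP; apply/negPn/negP => h; move: hcj; rewrite (BDm _ _ h) eqxx.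
have edi : blk q d = blk q i.
  by apply/eqP; apply/negPn/negP => h; move: hdi; rewrite (BDm _ _ h) eqxx.
rewrite (hA.1 d c) !scalerA; congr (_ *: _).
have -> : q d c = q i j.
  rewrite (blk_row edi c).
  have qci := blk_row ecj i.
  have h1 := hq.1 i c; have h2 := hq.1 i j.
  have nz1 : q c i != 0 by apply/eqP => h; move: h1; rewrite h mulr0 => /eqP; rewrite eq_sym oner_eq0.
  apply: (mulIf nz1); by rewrite h1 qci h2.
by rewrite mulrC (mulrC (m d i)).
Qed.

Lemma part1 (k : fieldType) n (q : 'M[k]_n) (hq : qmatrix q) (A : algType k)
    (x : 'I_n -> A) (hA : is_Oq q x) m : ImPhi q m -> Mq x m.
Proof.
move=> hm; have [um hm'] := ImPhi_inv hm.
have [f [hf fx _]] := hA.2 A _ (qrel_Phi hq hA hm).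
have [g [hg gx _]] := hA.2 A _ (qrel_Phi hq hA hm').
split => //; exists f; split => //; exists g.
- apply: (Oq_id hA (ah_comp hf hg)) => i /=.
  by rewrite fx (@lin_comp _ _ _ x g m (invmx m) hg gx) mulVmx // sum_delta.
- apply: (Oq_id hA (ah_comp hg hf)) => i /=.
  by rewrite gx (@lin_comp _ _ _ x f (invmx m) m hf fx) mulmxV // sum_delta.
Qed.

Unset Implicit Arguments.

Theorem lemma4p4 (k : fieldType) (n : nat) (hn : (0 < n)%N) (q : 'M[k]_n)
    (hq : qmatrix q) (A : algType k) (x : 'I_n -> A) (hA : is_Oq q x) :
  [/\ (forall m, ImPhi q m -> Mq x m),
      ImPhi q 1%:M,
      (forall m1 m2, ImPhi q m1 -> ImPhi q m2 -> ImPhi q (m1 *m m2)),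
      (forall m, ImPhi q m -> ImPhi q (invmx m))
    & (forall a m, Mq x a -> ImPhi q m -> ImPhi q (a *m m *m invmx a))].
Proof.
split.
- exact: part1.
- exists (fun S => 1%:M); split; [by move=> i; exact: unitmx1 | by rewrite Phi_one].
- move=> m1 m2 [N1 [u1 ->]] [N2 [u2 ->]].
  exists (fun S => N1 S *m N2 S); split; last by rewrite Phi_mul.
  by move=> i; rewrite unitmx_mul u1 u2.
- by move=> m hm; exact: (ImPhi_inv hm).2.
- move=> a m ha hm.
  have ga := Mq_good hq hA ha; have gb := Mq_good hq hA (Mq_inv hA ha).
  have ua := ha.1.
  have ab : a *m invmx a = 1%:M by rewrite mulmxV.
  have [um hm'] := ImPhi_inv hm.
  apply: BD_ImPhi.
  - by rewrite !unitmx_mul ua um unitmx_inv ua.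
  - exact: (conj_BD hq ga gb ab (ImPhi_BD hm)).
  - have -> : invmx (a *m m *m invmx a) = a *m invmx m *m invmx a.
      apply: invmx_uniq.
      rewrite !mulmxA -(mulmxA _ (invmx a) a) mulVmx // mulmx1.
      by rewrite -(mulmxA _ m) mulmxV // mulmx1 mulmxV.
    exact: (conj_BD hq ga gb ab (ImPhi_BD hm')).
Qed.
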